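(* Let $k>1/2$ be real, and let $d$ be a positive odd integer. With the notation of the context, for each $1\le j\le R$, \[ \mathcal{N}_j(d,2k-1)^{\frac{2k}{2k-1}} \le \mathcal{N}_j(d,2k)\,\frac{(1+e^{-\ell_j})^{\frac{2k}{2k-1}}}{(1-e^{-\ell_j})^2} + \mathcal{Q}_j(d), \] where $\mathcal{Q}_j(d)=\Big(\frac{124k^2\,\mathcal{P}_j(d)}{\ell_j}\Big)^{2r_k\ell_j}$ with $r_k=1+\lceil \frac{k}{2k-1}\rceil$.
   Context: $f$ is a fixed holomorphic Hecke eigenform of weight $\kappa$ for $SL_2(\mathbb{Z})$ with Fourier expansion $f(z)=\sum_{n\ge1}\lambda_f(n)n^{(\kappa-1)/2}e(nz)$, where $\lambda_f(n)$ are real, $\lambda_f(1)=1$, $|\lambda_f(n)|\le d(n)$. $\chi_{8d}=\left(\frac{8d}{\cdot}\right)$ is the Kronecker symbol. $X$ is large; $N,M$ are large natural numbers depending only on $k$. Define even natural numbers $\ell_1=2\lceil N\log\log X\rceil$ and $\ell_{j+1}=2\lceil N\log \ell_j\rceil$, and let $R$ be the largest natural number with $\ell_R>10^M$; $M$ is taken large enough that $\ell_j>\ell_{j+1}^2$ for $1\le j\le R-1$. Let $P_1$ be the set of odd primes $\le X^{1/\ell_1^2}$ and, for $2\le j\le R$, $P_j$ the set of primes in $(X^{1/\ell_{j-1}^2},X^{1/\ell_j^2}]$. Set $\mathcal{P}_j(d)=\sum_{p\in P_j}\lambda_f(p)\chi_{8d}(p)/\sqrt p$ (a real number). For an integer $\ell\ge0$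 and real $x$, $E_\ell(x)=\sum_{i=0}^{\ell}x^i/i!$, and for real $\alpha$, $\mathcal{N}_j(d,\alpha)=E_{\ell_j}(\alpha\mathcal{P}_j(d))$, which is positive since $\ell_j$ is even. *)

(* Defs.v *)
From HB Require Import structures.
From mathcomp Require Import all_boot all_order all_algebra.
From mathcomp Require Import all_classical all_reals all_analysis.
Set Implicit Arguments. Unset Strict Implicit. Unset Printing Implicit Defensive.
Import Order.TTheory GRing.Theory Num.Theory.
Local Open Scope ring_scope.

(* ceiling of a real, as a natural number (used only on positive arguments) *)
Definition nceil {R : realType} (x : R) : nat := `|Num.ceil x|%N.

(* Kronecker symbol chi_{8d}(p) = (8d / p) evaluated at a prime p.
   For p = 2 it is 0 (8d even); for odd primes p it is the Legendre symbol. *)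
Definition chi8d (d p : nat) : int :=
  if p == 2%N then 0
  else if (p %| 8 * d)%N then 0
  else if [exists x : 'I_p, ((x * x) %% p == (8 * d) %% p)%N] then 1 else -1.

Definition E_trunc {R : realType} (l : nat) (x : R) : R :=
  \sum_(i < l.+1) x ^+ i / (i`!)%:R.

(* ell_aux n = ell_{n+1}:  ell_1 = 2 ceil(N log log X), ell_{j+1} = 2 ceil(N log ell_j) *)
Fixpoint ell_aux {R : realType} (N : nat) (X : R) (n : nat) : nat :=
  match n with
  | 0 => (2 * nceil (N%:R * ln (ln X)))%N
  | n'.+1 => (2 * nceil (N%:R * ln ((ell_aux N X n')%:R : R)))%N
  end.

Definition ell {R : realType} (N : nat) (X : R) (j : nat) : nat := ell_aux N X j.-1.

Definition Pupper {R : realType} (N : nat) (X : R) (j : nat) : R :=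
  X `^ (((ell N X j) ^ 2)%:R)^-1.

Definition inP {R : realType} (N : nat) (X : R) (j p : nat) : bool :=
  prime p && (p%:R <= Pupper N X j) &&
  (if j == 1%N then p != 2%N else Pupper N X j.-1 < p%:R).

Definition Psum {R : realType} (lam : nat -> R) (N : nat) (X : R) (d j : nat) : R :=
  \sum_(p < (Num.truncn (Pupper N X j)).+1 | inP N X j p)
     lam p * (chi8d d p)%:~R / Num.sqrt (p%:R).

Definition Nj {R : realType} (lam : nat -> R) (N : nat) (X : R) (d j : nat) (a : R) : R :=
  E_trunc (ell N X j) (a * Psum lam N X d j).

Definition r_k {R : realType} (k : R) : nat := (1 + nceil (k / (2 * k - 1)))%N.

Definition Qj {R : realType} (lam : nat -> R) (N : nat) (X : R) (d j : nat) (k : R) : R :=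
  (124 * k ^+ 2 * Psum lam N X d j / (ell N X j)%:R) ^+ (2 * r_k k * ell N X j).

(* Main.v *)
Require Import Defs.
From HB Require Import structures.
From mathcomp Require Import all_boot all_order all_algebra.
From mathcomp Require Import all_classical all_reals all_analysis.
Import Order.TTheory GRing.Theory Num.Theory.
From mathcomp Require Import ring lra.
Local Open Scope ring_scope.

Section H.
Variable R : realType.
Implicit Types (x t : R).

Lemma e_le : expR (1:R) <= 29/10.
Proof.
have h1 : expR (1:R) = expR (1/10) ^+ 10.
  by rewrite -expRM_natr; congr expR; rewrite mul1r mulVf.
have h2 : 9/10 <= expR (- (1/10) : R).
  by apply: le_trans (expR_ge1Dx _); lra.
have h3 : expR (1/10 : R) <= 10/9.
  rewrite -[expR (1/10)]invrK -expRN.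
  rewrite -[10/9 : R]invf_div; rewrite lef_pV2 ?posrE ?expR_gt0 //; lra.
rewrite h1; apply: le_trans (_ : (10/9 : R) ^+ 10 <= _).
  by rewrite lerXn2r ?nnegrE ?expR_ge0 //; lra.
rewrite !exprS expr0; lra.
Qed.

Lemma e_ge : 2 <= expR (1:R).
Proof. by apply: le_trans (expR_ge1Dx _); lra. Qed.

Lemma pow_fact_le x n : 0 <= x -> x ^+ n / n`!%:R <= expR x.
Proof.
move=> x0; case: n => [|n].
  by rewrite expr0 fact0 divr1; apply: le_trans (expR_ge1Dx _); lra.
apply: le_trans (expR_ge1Dxn n x0); lra.
Qed.

Lemma fact_lb (i : nat) : (i%:R : R) ^+ i / i`!%:R <= expR 1 ^+ i.
Proof.
by rewrite -expRM_natr mul1r; apply: pow_fact_le.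
Qed.

Lemma term_le (l i : nat) t : (0 < l)%N -> (l <= i)%N ->
  `|t| ^+ i / i`!%:R <= (expR 1 * `|t| / l%:R) ^+ i.
Proof.
move=> l0 li.
have i0 : (0 < i)%N by apply: leq_trans li.
have iR : (i%:R : R) != 0 by rewrite pnatr_eq0 -lt0n.
have -> : `|t| ^+ i / i`!%:R = (`|t| / i%:R) ^+ i * ((i%:R : R) ^+ i / i`!%:R).
  by rewrite expr_div_n mulrA divfK // expf_neq0.
rewrite -(mulrA (expR 1)) [X in _ <= X]exprMn [X in _ <= X]mulrC.
apply: ler_pM.
- by rewrite exprn_ge0 // divr_ge0.
- by rewrite divr_ge0 // exprn_ge0.
- rewrite lerXn2r ?nnegrE ?divr_ge0 //.
  by rewrite ler_pdivrMr ?ltr0n // mulrAC ler_pdivlMr ?ltr0n // ler_wpM2l // ler_nat.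
- exact: fact_lb.
Qed.

Lemma geom_le (q : R) m n : 0 <= q -> q <= 1/2 ->
  \sum_(m <= i < m + n) q ^+ i <= 2 * q ^+ m.
Proof.
move=> q0 q2; elim: n => [|n IH].
  by rewrite addn0 big_geq // mulr_ge0 // exprn_ge0.
rewrite addnS big_nat_recl ?leq_addr //.
have -> : \sum_(m <= i < m + n) q ^+ i.+1 = q * \sum_(m <= i < m + n) q ^+ i.
  by rewrite mulr_sumr; apply: eq_bigr => i _; rewrite exprS.
have hq := exprn_ge0 m q0.
have : q * \sum_(m <= i < m + n) q ^+ i <= q * (2 * q ^+ m) by rewrite ler_wpM2l.
nra.
Qed.
Lemma partial_tail (l n : nat) t : (0 < l)%N -> (l < n)%N ->
  expR 1 * `|t| / l%:R <= 1/2 ->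
  `|series (exp_coeff t) n - E_trunc l t| <= 2 * (expR 1 * `|t| / l%:R) ^+ l.+1.
Proof.
move=> l0 ln q2.
set q := expR 1 * `|t| / l%:R.
have q0 : 0 <= q by rewrite /q divr_ge0 // mulr_ge0 // expR_ge0.
rewrite /series /= (@big_cat_nat _ _ _ l.+1) //= /E_trunc big_mkord addrC addrK.
apply: le_trans (ler_norm_sum _ _ _) _.
apply: le_trans (_ : \sum_(l.+1 <= i < n) q ^+ i <= _).
  rewrite big_nat_cond [X in _ <= X]big_nat_cond.
  apply: ler_sum => i /andP [/andP [li _] _].
  rewrite /exp_coeff /= normrM normfV normrX [`|_%:R|]ger0_norm //.
  by apply: term_le => //; apply: ltnW.
by rewrite -(subnKC ln) geom_le.
Qed.

Lemma approx (l : nat) t : (0 < l)%N ->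
  expR 1 * `|t| / l%:R <= 1/2 ->
  `|expR t - E_trunc l t| <= 2 * (expR 1 * `|t| / l%:R) ^+ l.+1.
Proof.
move=> l0 q2.
set T := 2 * _.
have cv := is_cvg_series_exp_coeff t.
have h1 : E_trunc l t - T <= expR t.
  apply: limr_ge => //; near=> n.
  have ln : (l < n)%N by near: n; exists l.+1 => // m /=.
  have := @partial_tail l n t l0 ln q2.
  rewrite ler_norml => /andP [h _]; rewrite -/T in h; lra.
have h2 : expR t <= E_trunc l t + T.
  apply: limr_le => //; near=> n.
  have ln : (l < n)%N by near: n; exists l.+1 => // m /=.
  have := @partial_tail l n t l0 ln q2.
  rewrite ler_norml => /andP [_ h]; rewrite -/T in h; lra.
rewrite ler_norml; apply/andP; split; lra.
Unshelve. all: by end_near.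
Qed.

Lemma rel_err (l : nat) t : (0 < l)%N -> 31 * `|t| <= 3 * l%:R ->
  `|expR t - E_trunc l t| <= expR (- l%:R) * expR t.
Proof.
move=> l0 h.
have lR : (0 : R) < l%:R by rewrite ltr0n.
set s := `|t| / l%:R.
have s0 : 0 <= s by rewrite /s divr_ge0.
have s3 : s <= 3/31.
  by rewrite /s ler_pdivrMr // ; lra.
have eu := e_le; have el := e_ge.
set q := expR 1 * `|t| / l%:R.
have qs : q = expR 1 * s by rewrite /q /s mulrA.
have q0 : 0 <= q by rewrite qs mulr_ge0 // expR_ge0.
have q2 : q <= 1/2.
  rewrite qs; apply: le_trans (_ : 29/10 * (3/31) <= _); last lra.
  by apply: ler_pM => //; apply: expR_ge0.
apply: le_trans (@approx l t l0 q2) _.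
have es : expR s <= 31/28.
  have h2 : 28/31 <= expR (- s) by apply: le_trans (expR_ge1Dx _); lra.
  rewrite -[expR s]invrK -expRN -[31/28 : R]invf_div lef_pV2 ?posrE ?expR_gt0 //; lra.
have key : q * expR (1 + s) <= 1.
  rewrite expRD qs.
  have a0 : 0 <= expR (1:R) := expR_ge0 _.
  have b0 : 0 <= expR s := expR_ge0 _.
  have h1 : expR 1 * expR 1 <= 29/10 * (29/10 : R) by apply: ler_pM.
  have h2 : s * expR s <= 3/31 * (31/28 : R) by apply: ler_pM.
  have -> : expR 1 * s * (expR 1 * expR s) = (expR 1 * expR 1) * (s * expR s) by ring.
  apply: le_trans (_ : (29/10 * (29/10)) * (3/31 * (31/28)) <= _); last lra.
  by apply: ler_pM => //; rewrite mulr_ge0.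
have hE : expR (l%:R + `|t|) = expR (1 + s) ^+ l.
  by rewrite -expRM_natr mulrDl mul1r /s divfK // gt_eqF.
have hlow : expR (- (l%:R + `|t|)) <= expR (- l%:R) * expR t.
  rewrite opprD expRD ler_wpM2l ?expR_ge0 // ler_expR.
  by have := ler_norm (- t); rewrite normrN => ?; lra.
apply: le_trans hlow.
rewrite expRN hE -exprVn exprS mulrA.
have e1 : 0 < expR (1 + s) by apply: expR_gt0.
have qE : q <= (expR (1 + s))^-1 by rewrite -div1r ler_pdivlMr.
rewrite -[X in _ <= X]mul1r; apply: ler_pM.
- by rewrite mulr_ge0.
- by rewrite exprn_ge0.
- by move: q2; rewrite /q; lra.
- by rewrite lerXn2r // nnegrE invr_ge0 ltW.
Qed.

Lemma geom_binom (u : R) n : 0 <= u -> \sum_(i < n.+1) u ^+ i <= (1 + u) ^+ n.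
Proof.
move=> u0; elim: n => [|n IH]; first by rewrite big_ord_recl big_ord0 expr0 addr0.
rewrite big_ord_recl expr0.
have -> : \sum_(i < n.+1) u ^+ (bump 0 i) = u * \sum_(i < n.+1) u ^+ i.
  by rewrite mulr_sumr; apply: eq_bigr => i _; rewrite exprS.
have h1 : 1 <= (1 + u) ^+ n by rewrite exprn_ege1 // lerDl.
have : u * \sum_(i < n.+1) u ^+ i <= u * (1 + u) ^+ n by rewrite ler_wpM2l.
rewrite exprS; nra.
Qed.

Lemma big_bound (l : nat) t : (0 < l)%N ->
  `|E_trunc l t| <= (expR 1 * (1 + `|t| / l%:R)) ^+ l.
Proof.
move=> l0.
have lR : (0 : R) < l%:R by rewrite ltr0n.
set u := `|t| / l%:R.
have u0 : 0 <= u by rewrite /u divr_ge0.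
rewrite /E_trunc; apply: le_trans (ler_norm_sum _ _ _) _.
apply: le_trans (_ : \sum_(i < l.+1) expR 1 ^+ l * u ^+ i <= _); last first.
  by rewrite -mulr_sumr exprMn ler_wpM2l ?exprn_ge0 ?expR_ge0 // geom_binom.
apply: ler_sum => i _.
rewrite normrM normfV normrX [`|_%:R|]ger0_norm //.
have -> : `|t| = u * l%:R by rewrite /u divfK // gt_eqF.
rewrite exprMn -mulrA mulrC ler_wpM2r ?exprn_ge0 //.
rewrite -expRM_natr mul1r; apply: pow_fact_le; exact: ltW.
Qed.
Lemma delta_le (l : nat) : (0 < l)%N -> 0 < expR (- l%:R : R) <= 1/2.
Proof.
move=> l0; rewrite expR_gt0 /=.
apply: le_trans (_ : expR (-1) <= _).
  by rewrite ler_expR lerN2 ler1n.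
rewrite expRN -[1/2 : R]invf_div lef_pV2 ?posrE ?expR_gt0 //.
have := e_ge; lra.
Qed.

Lemma small_case (a b p : R) (l : nat) x (Q : R) : 0 < a -> a * p = b -> 0 <= p ->
  (0 < l)%N -> 31 * `|b * x| <= 3 * l%:R -> `|a * x| <= `|b * x| -> 0 <= Q ->
  E_trunc l (a * x) `^ p <=
  E_trunc l (b * x) * ((1 + expR (- l%:R)) `^ p / (1 - expR (- l%:R)) ^+ 2) + Q.
Proof.
move=> a0 hp p0 l0 hb hab Q0.
have /andP [d0 d2] := @delta_le l l0.
set d := expR (- l%:R) in d0 d2 *.
have ha' : 31 * `|a * x| <= 3 * l%:R by lra.
have := @rel_err l (a * x) l0 ha'; rewrite -/d ler_norml => /andP [ha1 ha2].
have := @rel_err l (b * x) l0 hb; rewrite -/d ler_norml => /andP [hb1 hb2].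
have ea := expR_gt0 (a * x); have eb := expR_gt0 (b * x).
have Ea0 : 0 <= E_trunc l (a * x) by nra.
have Eb0 : (1 - d) * expR (b * x) <= E_trunc l (b * x) by nra.
apply: le_trans (_ : (1 + d) `^ p * expR (b * x) <= _).
  apply: le_trans (_ : ((1 + d) * expR (a * x)) `^ p <= _).
    apply: ge0_ler_powR => //; rewrite ?nnegrE //; [nra | nra].
  rewrite powRM; [|lra|lra].
  by rewrite -expRM -hp mulrAC.
set P := (1 + d) `^ p.
have P0 : 0 <= P := powR_ge0 _ _.
have D0 : 0 < 1 - d by lra.
have C0 : 0 <= P / (1 - d) ^+ 2 by rewrite divr_ge0 // exprn_ge0 // ltW.
apply: le_trans (_ : (1 - d) * expR (b * x) * (P / (1 - d) ^+ 2) <= _); last first.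
  by rewrite -[X in X <= _]addr0 lerD // ler_wpM2r.
have -> : (1 - d) * expR (b * x) * (P / (1 - d) ^+ 2) = expR (b * x) * P / (1 - d).
  by field; rewrite gt_eqF.
rewrite ler_pdivlMr // mulrC [X in _ <= X]mulrC ler_piMl //; [|lra].
by rewrite mulr_ge0 // ltW.
Qed.
Lemma large_case (a b p : R) (l np : nat) x (z Q : R) :
  0 <= p -> p <= np%:R -> (0 < l)%N -> (np + 4 <= l)%N -> 3 <= z ->
  `|a * x| / l%:R <= z / 124 -> `|b * x| / l%:R <= z / 31 ->
  (z `^ p * z ^+ 2) ^+ l <= Q ->
  E_trunc l (a * x) `^ p <=
  E_trunc l (b * x) * ((1 + expR (- l%:R)) `^ p / (1 - expR (- l%:R)) ^+ 2) + Q.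
Proof.
move=> p0 pn l0 hl z3 ua ub hQ.
have eu := @e_le; have el := @e_ge.
have e0 : 0 <= expR (1:R) := expR_ge0 _.
have /andP [d0 d2] := @delta_le l l0.
set d := expR (- l%:R) in d0 d2 *.
have lR : (0 : R) < l%:R by rewrite ltr0n.
have ua0 : 0 <= `|a * x| / l%:R by rewrite divr_ge0 // ltW.
have ub0 : 0 <= `|b * x| / l%:R by rewrite divr_ge0 // ltW.
have hEa : `|E_trunc l (a * x)| <= z ^+ l.
  apply: le_trans (@big_bound l (a * x) l0) _.
  rewrite lerXn2r ?nnegrE ?mulr_ge0 //; first lra.
  apply: le_trans (_ : 29/10 * (1 + z / 124) <= _); last lra.
  by apply: ler_pM => //; lra.
have hEb : `|E_trunc l (b * x)| <= (z ^+ 2 / 2) ^+ l.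
  apply: le_trans (@big_bound l (b * x) l0) _.
  rewrite lerXn2r ?nnegrE ?mulr_ge0 ?divr_ge0 ?exprn_ge0 //; [lra|lra|].
  apply: le_trans (_ : 29/10 * (1 + z / 31) <= _).
    by apply: ler_pM => //; lra.
  rewrite expr2; nra.
set PZ := z `^ p.
have PZ1 : 1 <= PZ.
  by rewrite /PZ -(powRr0 z); apply: ler_powR => //; lra.
have Y1 : 1 <= PZ ^+ l by rewrite exprn_ege1.
have hL : E_trunc l (a * x) `^ p <= PZ ^+ l.
  have [Ea|Ea] := ltP (E_trunc l (a * x)) 0.
    by rewrite -[X in X <= _](ger0_norm (powR_ge0 _ _)) lt0_norm_powR.
  apply: le_trans (_ : (z ^+ l) `^ p <= _).
    apply: ge0_ler_powR => //; rewrite ?nnegrE ?exprn_ge0 //; [lra|].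
    by apply: le_trans hEa; rewrite ger0_norm.
  rewrite -powR_mulrn; last lra.
  by rewrite powRAC powR_mulrn // /PZ powR_ge0.
set P := (1 + d) `^ p.
have P0 : 0 <= P := powR_ge0 _ _.
have hP : P <= 2 ^+ np.
  apply: le_trans (_ : 2 `^ p <= _).
    by apply: ge0_ler_powR => //; rewrite ?nnegrE; lra.
  rewrite -(@powR_mulrn _ 2 np); last lra.
  by apply: ler_powR => //; lra.
have D2 : 1/4 <= (1 - d) ^+ 2 by rewrite expr2; nra.
have hC : P / (1 - d) ^+ 2 <= 4 * 2 ^+ np.
  have A0 : 0 < (1 - d) ^+ 2 by rewrite exprn_gt0 //; lra.
  rewrite ler_pdivrMr //.
  have h2n : (0:R) <= 2 ^+ np by rewrite exprn_ge0.
  move: h2n D2 hP A0; set A := (1 - d) ^+ 2; set B := (2:R) ^+ np => *; nra.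
have C0 : 0 <= P / (1 - d) ^+ 2 by rewrite divr_ge0 // exprn_ge0 //; lra.
have h2l : 16 * 2 ^+ np <= (2 : R) ^+ l.
  apply: le_trans (_ : (2 : R) ^+ (np + 4) <= _).
    by rewrite exprD mulrC !exprS expr0; lra.
  by rewrite ler_eXn2l //; lra.
set Wz := (z ^+ 2) ^+ l.
have W4 : 4 <= Wz.
  apply: le_trans (_ : z ^+ 2 <= _); first by rewrite expr2; nra.
  by rewrite ler_eXnr // expr2; nra.
have hB : `|E_trunc l (b * x)| <= Wz / 2 ^+ l by rewrite /Wz -expr_div_n.
have tl0 : (0 : R) < 2 ^+ l by rewrite exprn_gt0.
have hCB : P / (1 - d) ^+ 2 * `|E_trunc l (b * x)| <= Wz / 4.
  apply: le_trans (_ : (4 * 2 ^+ np) * (Wz / 2 ^+ l) <= _).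
    by apply: ler_pM => //; rewrite normr_ge0.
  rewrite mulrA ler_pdivrMr //.
  have h2n : (0:R) <= 2 ^+ np by rewrite exprn_ge0.
  move: h2n h2l W4; set B := (2:R) ^+ np; set T := (2:R) ^+ l => *; nra.
have hQ' : PZ ^+ l * Wz <= Q by rewrite /Wz -exprMn.
have hEb' : - `|E_trunc l (b * x)| <= E_trunc l (b * x).
  by rewrite lerNl -normrN ler_norm.
have : - (P / (1 - d) ^+ 2 * `|E_trunc l (b * x)|) <= E_trunc l (b * x) * (P / (1 - d) ^+ 2).
  by move: (ler_wpM2l C0 hEb'); rewrite mulrN [E_trunc _ _ * _]mulrC.
have : PZ ^+ l * 4 <= PZ ^+ l * Wz by rewrite ler_wpM2l //; lra.
nra.
Qed.
Lemma nceil_ge (y : R) : 0 <= y -> y <= (nceil y)%:R.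
Proof.
move=> y0; rewrite /nceil natr_absz ger0_norm; first exact: ceil_ge.
by rewrite ceil_ge0; lra.
Qed.

Lemma even_pow (w : R) m : w ^+ (2 * m) = `|w| ^+ (2 * m).
Proof.
have h : 0 <= w ^+ (2 * m) by rewrite exprM exprn_ge0 // sqr_ge0.
by rewrite -normrX ger0_norm.
Qed.

Lemma core (k : R) (hk : 2^-1 < k) (l : nat)
  (hl : (nceil (2 * k / (2 * k - 1)) + 4 <= l)%N) (x : R) :
  E_trunc l ((2 * k - 1) * x) `^ (2 * k / (2 * k - 1))
  <= E_trunc l (2 * k * x) * ((1 + expR (- l%:R)) `^ (2 * k / (2 * k - 1))
       / (1 - expR (- l%:R)) ^+ 2)
     + (124 * k ^+ 2 * x / l%:R) ^+ (2 * r_k k * l).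
Proof.
have l0 : (0 < l)%N by apply: leq_trans hl; rewrite addn4.
have lR : (0 : R) < l%:R by rewrite ltr0n.
have a0 : 0 < 2 * k - 1 by lra.
set a := 2 * k - 1 in a0 *.
set b := 2 * k.
set p := b / a.
have hp : a * p = b by rewrite /p mulrC divfK // gt_eqF.
have p0 : 0 <= p by rewrite /p divr_ge0 /b; lra.
set np := nceil p.
have pn : p <= np%:R := @nceil_ge p p0.
set z := 124 * k ^+ 2 * `|x| / l%:R.
have x0 := normr_ge0 x.
have k2 : 0 <= k ^+ 2 by rewrite sqr_ge0.
have z0 : 0 <= z by apply: divr_ge0; [apply: mulr_ge0 => //; apply: mulr_ge0 | apply: ltW].
have hw : `|124 * k ^+ 2 * x / l%:R| = z.
  by rewrite /z !normrM normfV (gtr0_norm lR) (ger0_norm (_ : 0 <= 124)) // -expr2 real_normK ?num_real.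
rewrite -mulnA even_pow hw.
set Q := z ^+ _.
have Q0 : 0 <= Q by apply: exprn_ge0.
have nax : `|a * x| = a * `|x| by rewrite normrM gtr0_norm.
have nbx : `|b * x| = b * `|x| by rewrite normrM gtr0_norm /b; lra.
have [zs|zl] := leP z 3.
- apply: small_case => //.
  + rewrite nbx /b.
    have : 124 * k ^+ 2 * `|x| <= 3 * l%:R by move: zs; rewrite /z ler_pdivrMr // mulrC.
    have : 0 <= k * `|x| * (2 * k - 1) by apply: mulr_ge0; [apply: mulr_ge0 => //; lra | lra].
    rewrite expr2; nra.
  + by rewrite nax nbx /b ler_wpM2r // /a; lra.
- apply: (@large_case a b p l np x z Q) => //.
  + lra.
  + have -> : z / 124 = k ^+ 2 * `|x| / l%:R by rewrite /z; field; rewrite gt_eqF.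
    rewrite nax; apply: ler_wpM2r; first by rewrite invr_ge0 ltW.
    apply: ler_wpM2r => //; rewrite /a.
    have : 0 <= (k - 1) ^+ 2 by rewrite sqr_ge0.
    rewrite !expr2; nra.
  + have -> : z / 31 = 4 * k ^+ 2 * `|x| / l%:R by rewrite /z; field; rewrite gt_eqF.
    rewrite nbx; apply: ler_wpM2r; first by rewrite invr_ge0 ltW.
    apply: ler_wpM2r => //; rewrite /b.
    rewrite !expr2; nra.
  + rewrite /Q mulnA exprM lerXn2r //; first by rewrite nnegrE mulr_ge0 ?powR_ge0 ?exprn_ge0.
      by rewrite nnegrE exprn_ge0.
    rewrite -(@powR_mulrn _ z 2) //.
    rewrite -powRD; last by rewrite gt_eqF //= ?implybT; lra.
    rewrite -powR_mulrn //; apply: ler_powR; first lra.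
    rewrite /r_k natrM natrD /p /b.
    have h1 : 0 <= k / (2 * k - 1) by apply: divr_ge0; lra.
    have := @nceil_ge (k / (2 * k - 1)) h1.
    have -> : 2 * k / a = 2 * (k / (2 * k - 1)) by rewrite /a mulrA.
    lra.
Qed.

End H.

Lemma ell_mono (R : realType) (N : nat) (X : R) (Rr : nat) :
  (forall j, (1 <= j)%N -> (j < Rr)%N -> (ell N X j.+1 ^ 2 < ell N X j)%N) ->
  forall m j, (1 <= j)%N -> (j + m = Rr)%N -> (ell N X Rr <= ell N X j)%N.
Proof.
move=> hc; elim=> [|m IH] j j1 hjm.
  by rewrite -hjm addn0.
have jR : (j < Rr)%N by rewrite -hjm addnS ltnS leq_addr.
apply: leq_trans (IH j.+1 _ _) _ => //; first by rewrite addSnnS.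
apply: ltnW; apply: leq_ltn_trans (hc j j1 jR).
by case: (ell N X j.+1) => // n; rewrite expnS expn1 leq_pmulr.
Qed.

Theorem lemma3p4 (R : realType) (k : R) (hk : 2^-1 < k) :
  exists N0 M0 : nat, forall N M : nat, (N0 <= N)%N -> (M0 <= M)%N ->
  exists X0 : R, forall X : R, X0 <= X ->
  forall Rr : nat,
    (10 ^ M < ell N X Rr)%N ->
    (forall n, (Rr < n)%N -> (ell N X n <= 10 ^ M)%N) ->
    (forall j, (1 <= j)%N -> (j < Rr)%N -> (ell N X j.+1 ^ 2 < ell N X j)%N) ->
  forall lam : nat -> R,
    lam 1%N = 1 ->
    (forall n, `|lam n| <= (size (divisors n))%:R) ->
  forall d : nat, (0 < d)%N -> odd d ->
  forall j : nat, (1 <= j)%N -> (j <= Rr)%N ->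
    Nj lam N X d j (2 * k - 1) `^ (2 * k / (2 * k - 1))
    <= Nj lam N X d j (2 * k)
       * ((1 + expR (- (ell N X j)%:R)) `^ (2 * k / (2 * k - 1))
          / (1 - expR (- (ell N X j)%:R)) ^+ 2)
     + Qj lam N X d j k.
Proof.
exists 0%N, (nceil (2 * k / (2 * k - 1)) + 4)%N => N M _ hM.
exists 0 => X _ Rr hR _ hc lam _ _ d _ _ j j1 jR.
have hl : (nceil (2 * k / (2 * k - 1)) + 4 <= ell N X j)%N.
  apply: leq_trans hM _.
  apply: leq_trans (_ : ell N X Rr <= _)%N; last first.
    by apply: (@ell_mono R N X Rr hc (Rr - j) j j1); rewrite subnKC.
  apply: ltnW; apply: leq_ltn_trans hR.
  by apply: ltnW; apply: ltn_expl.
rewrite /Nj /Qj.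
exact: core.
Qed.
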